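(* Let $r,m$ be positive integers, $n=2rm$, and let $f:\mathbb{F}_{2^n}\to\mathbb{F}_{2^n}$ be an almost-$(2^r+1)$-to-1 component-wise plateaued map with $f(0)=0$ such that $0$ is the unique element of $\mathrm{Im}(f)$ with exactly one preimage. Then $f$ has exactly $\frac{2^r}{2^r+1}(2^n-1)$ bent components and exactly $\frac{2^n-1}{2^r+1}$ plateaued components with amplitude $t=2r$. Moreover, for every $b\in\mathbb{F}_{2^n}^*$, \[W_f(b,0)\in\{(-1)^m2^{rm},\,(-1)^{m+1}2^{r(m+1)}\}.\]
   Context: $\mathrm{Tr}$ denotes the absolute trace $\mathbb{F}_{2^n}\to\mathbb{F}_2$. The Walsh transform is $W_f(b,a)=\sum_{x\in\mathbb{F}_{2^n}}(-1)^{\mathrm{Tr}(bf(x)+ax)}$. The component functions of $f$ are $x\mapsto\mathrm{Tr}(\lambda f(x))$, $\lambda\in\mathbb{F}_{2^n}^*$. The component for $\lambda$ is plateaued with amplitude $t\geq 0$ if $W_f(\lambda,a)\in\{0,\pm 2^{(n+t)/2}\}$ for all $a\in\mathbb{F}_{2^n}$; $f$ is component-wise plateaued if all its components are plateaued; for $n$ even a plateaued component with $t=0$ is called bent. $f$ is almost-$k$-to-1 if there is a unique element of $\mathrm{Im}(f)$ with exactly one preimage and every other element of $\mathrm{Im}(f)$ has exactly $k$ preimages. *)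

(* Defs.v *)
From mathcomp Require Import all_boot all_order all_algebra.
Set Implicit Arguments. Unset Strict Implicit. Unset Printing Implicit Defensive.
Import Order.TTheory GRing.Theory Num.Theory.
Local Open Scope ring_scope.

(* F plays the role of F_{2^n}; the statement assumes #|F| = 2^n. *)
Section Walsh.
Variables (F : finFieldType) (n : nat).

(* absolute trace F_{2^n} -> F_2 (value in the prime subfield {0,1} of F) *)
Definition trF (x : F) : F := \sum_(i < n) x ^+ (2 ^ i).

Definition chi (x : F) : int := if trF x == 0 then 1 else -1.

Definition walsh (f : F -> F) (b a : F) : int :=
  \sum_(x : F) chi (b * f x + a * x).

(* component lambda is plateaued with amplitude t:
   W_f(lambda,a) in {0, +-2^((n+t)/2)} for all a, written as W^2 in {0, 2^(n+t)} *)
Definition plateaued_comp (f : F -> F) (lam : F) (t : nat) : bool :=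
  [forall a : F, (walsh f lam a == 0) || ((walsh f lam a) ^+ 2 == (2 ^ (n + t))%:Z)].

Definition componentwise_plateaued (f : F -> F) : Prop :=
  forall lam : F, lam != 0 -> exists t : nat, plateaued_comp f lam t.

Definition bent_comp (f : F -> F) (lam : F) : bool := plateaued_comp f lam 0.

End Walsh.

Definition preim_card (F : finType) (G : eqType) (f : F -> G) (y : G) : nat :=
  #|[set x | f x == y]|.

Definition almost_k_to_1 (F : finType) (f : F -> F) (k : nat) : Prop :=
  exists y0, [/\ y0 \in codom f, preim_card f y0 = 1%N &
    forall y, y \in codom f -> y != y0 -> preim_card f y = k].

(* Main.v *)
Require Import Defs.
From mathcomp Require Import all_boot all_order all_algebra finfield.
From mathcomp Require Import zify ring lra.
Import GRing.Theory Num.Theory.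
Local Open Scope ring_scope.


Lemma pow2_sq (a e : nat) : (a ^ 2 = 2 ^ e)%N -> exists k, a = (2^k)%N /\ e = (2*k)%N.
Proof.
move=> h.
have : (a %| 2 ^ e)%N by rewrite -h expnS expn1 dvdn_mulr.
case/(dvdn_pfactor _ _ (isT : prime 2)) => k _ ak.
exists k; split => //.
move: h; rewrite ak -expnM mulnC => /expnI.
by move=> /(_ isT).
Qed.

Lemma Zpow (a k : nat) : (a ^ k)%:Z = (a%:Z) ^+ k.
Proof. by rewrite -!natz natrX. Qed.

Lemma cong_pow (R : int) q : exists z, R ^+ q - (-1) ^+ q = (R + 1) * z.
Proof.
elim: q => [|q [z hz]]; first by exists 0; rewrite !expr0 subrr mulr0.
exists (R * z + (-1) ^+ q).
have -> : R ^+ q.+1 - (-1) ^+ q.+1 = R * (R ^+ q - (-1) ^+ q) + (-1) ^+ q * (R + 1).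
  by rewrite !exprS; ring.
by rewrite hz; ring.
Qed.

Lemma small_cong (e S R L : int) : (e = 1 \/ e = -1) -> 1 <= S -> 2 * S <= R ->
  e * S - 1 = (R + 1) * L -> e = 1 /\ S = 1.
Proof.
move=> he h1 h2 h3.
have [L0|[L0|L0]] : L = 0 \/ 1 <= L \/ L <= -1 by lia.
- move: h3; rewrite L0 mulr0; case: he => -> ; lia.
- have : 0 <= (R + 1) * (L - 1) by apply: mulr_ge0; lia.
  case: he h3 => -> ; lia.
- have : 0 <= (R + 1) * (- 1 - L) by apply: mulr_ge0; lia.
  case: he h3 => -> ; lia.
Qed.

Lemma NT (r m t : nat) (W K : int) : (0 < r)%N ->
  W = 1 + ((2^r)%:Z + 1) * K -> W ^+ 2 = (2 ^ (2 * r * m + t))%:Z ->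
  exists q, (m <= q)%N /\ W = (-1) ^+ q * (2 ^ (r * q))%:Z.
Proof.
move=> r0 hK hW.
have hA : (`|W| ^ 2 = 2 ^ (2 * r * m + t))%N by rewrite -abszX hW absz_nat.
have [k [Ak Ek]] := pow2_sq _ _ hA.
have [σ [hσ Wσ]] : exists σ : int, (σ = 1 \/ σ = -1) /\ W = σ * (2^k)%:Z.
  have : (W - (2^k)%:Z) * (W + (2^k)%:Z) = 0.
    by rewrite -subr_sqr hW -Zpow -expnM [(k * 2)%N]mulnC -Ek subrr.
  move/eqP; rewrite mulf_eq0 subr_eq0 addr_eq0 => /orP[/eqP h|/eqP h].
    by exists 1; rewrite mul1r; split; [left|].
  by exists (-1); rewrite mulN1r; split; [right|].
set q := (k %/ r)%N; set s := (k %% r)%N.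
have ks : k = (q * r + s)%N := divn_eq k r.
have sr : (s < r)%N := ltn_pmod k r0.
set S := (2^s)%:Z; set R := (2^r)%:Z.
have [z hz] := cong_pow R q.
have hz' : R ^+ q = (-1) ^+ q + (R + 1) * z by rewrite -hz addrC subrK.
have E2k : (2^k)%:Z = S * R ^+ q.
  by rewrite ks addnC expnD PoszM mulnC expnM (Zpow (2^r)).
have hτ : ((-1) ^+ q = 1 :> int) \/ ((-1) ^+ q = -1 :> int).
  by have := @signr_odd int q; case: (odd q) => <-; rewrite ?expr1 ?expr0; auto.
set τ := (-1) ^+ q in hz' hτ *.
have key : σ * τ * S - 1 = (R + 1) * (K - σ * S * z).
  have h : σ * (S * (τ + (R + 1) * z)) = 1 + (R + 1) * K by rewrite -hK Wσ E2k hz'.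
  apply/eqP; rewrite -subr_eq0; apply/eqP.
  transitivity (σ * (S * (τ + (R + 1) * z)) - (1 + (R + 1) * K)); first by ring.
  by rewrite h subrr.
have S1 : 1 <= S by rewrite /S; have := expn_gt0 2 s; lia.
have S2 : 2 * S <= R.
  have : (2 * 2^s <= 2^r)%N by rewrite -expnS leq_exp2l.
  rewrite /S /R; lia.
have he : σ * τ = 1 \/ σ * τ = -1.
  by case: hσ => ->; case: hτ => ->; rewrite ?mul1r ?mulN1r ?opprK; auto.
have [e1 Se] := small_cong _ _ _ _ he S1 S2 key.
have s0 : s = 0%N.
  have : (2 ^ s = 2 ^ 0)%N by move: Se; rewrite /S; lia.
  by move/expnI => /(_ isT).
exists q; split.
  have : (r * m <= r * q)%N by move: Ek; rewrite ks s0; lia.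
  by rewrite leq_pmul2l.
rewrite Wσ ks s0 addn0 mulnC.
have -> : σ = τ by case: hσ e1 => ->; case: hτ => ->; rewrite ?mul1r ?mulN1r; lia.
by [].
Qed.

Lemma Pnonneg (r m q : nat) : (0 < r)%N -> (m <= q)%N ->
  0 <= ((-1)^+q * (2^(r * q))%:Z - (-1)^+m * (2^(r * m))%:Z) *
       ((-1)^+q * (2^(r * q))%:Z - (-1)^+m.+1 * (2^(r * m.+1))%:Z).
Proof.
move=> r0 mq.
have [->|qm] := eqVneq q m; first by rewrite subrr mul0r.
have [->|qm1] := eqVneq q m.+1; first by rewrite subrr mulr0.
have mq2 : (m.+2 <= q)%N by lia.
set X := (2^(r * q))%:Z; set A := (2^(r * m))%:Z; set Rr := (2^r)%:Z.
have E1 : (2^(r * m.+1))%:Z = A * Rr by rewrite /A /Rr -PoszM -expnD mulnS addnC.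
rewrite E1.
have XAR : A * Rr <= X.
  rewrite /A /Rr /X -PoszM -expnD lez_nat leq_exp2l //; nia.
have A1 : 1 <= A by rewrite /A; have := expn_gt0 2 (r * m); lia.
have R2 : 2 <= Rr.
  have : (2 ^ 1 <= 2 ^ r)%N by rewrite leq_exp2l.
  by rewrite /Rr expn1; lia.
have XA : A <= X by nia.
have h1 : 0 <= (X - A) * (X + A * Rr) by apply: mulr_ge0; nia.
have h2 : 0 <= (X + A) * (X - A * Rr) by apply: mulr_ge0; nia.
have hs : forall k : nat, ((-1) ^+ k = 1 :> int) \/ ((-1) ^+ k = -1 :> int).
  by move=> k; have := @signr_odd int k; case: (odd k) => <-; rewrite ?expr1 ?expr0; auto.
rewrite exprS.
by case: (hs q) => ->; case: (hs m) => ->; nia.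
Qed.

Section Tr.
Variables (F : finFieldType) (n : nat).
Hypothesis ch2 : (2%N \in [pchar F]).
Hypothesis cardF : #|F| = (2^n)%N.
Hypothesis n_gt0 : (0 < n)%N.
Local Notation tr := (@trF F n).
Local Notation ch := (@chi F n).

Lemma frobD (x y : F) i : (x+y)^+(2^i) = x^+(2^i) + y^+(2^i).
Proof.
elim: i => [|i IH]; first by rewrite !expr1.
by rewrite expnSr !exprM IH -!(pFrobenius_autE ch2) rmorphD.
Qed.

Lemma trD x y : tr (x+y) = tr x + tr y.
Proof. by rewrite /trF -big_split; apply: eq_bigr => i _; rewrite frobD. Qed.

Lemma trX2 x : tr x ^+ 2 = tr x.
Proof.
rewrite -(pFrobenius_autE ch2) /trF rmorph_sum /=.
case: n n_gt0 cardF => // n' _ cF.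
rewrite big_ord_recr big_ord_recl /= expn0 expr1 addrC.
congr (_ + _); first by rewrite pFrobenius_autE -exprM -expnSr -cF expf_card.
by apply: eq_bigr => i _; rewrite pFrobenius_autE -exprM -expnSr /bump leq0n add1n.
Qed.

Lemma tr01 x : tr x = 0 \/ tr x = 1.
Proof.
have : tr x * (tr x - 1) = 0 by rewrite mulrBr mulr1 -expr2 trX2 subrr.
by move/eqP; rewrite mulf_eq0 subr_eq0 => /orP[] /eqP; [left|right].
Qed.

Lemma one_one : (1 + 1 : F) = 0.
Proof. by have := pcharf0 ch2; rewrite -mulr2n. Qed.

Lemma chiD x y : ch (x+y) = ch x * ch y.
Proof.
rewrite /chi trD.
case: (tr01 x) => ->; case: (tr01 y) => ->;
  rewrite ?addr0 ?add0r ?one_one ?eqxx ?oner_eq0 //.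
Qed.

Lemma tr0 : tr 0 = 0.
Proof. by rewrite /trF big1 // => i _; rewrite expr0n expn_eq0. Qed.

Lemma chi0 : ch 0 = 1.
Proof. by rewrite /chi tr0 eqxx. Qed.

Lemma tr_nonzero : exists c, tr c = 1.
Proof.
move: tr01; case: n n_gt0 cardF => // n' _ cF t01.
pose p : {poly F} := \sum_(i < n'.+1) 'X^(2^i).
have hp x : p.[x] = @trF F n'.+1 x.
  by rewrite /p horner_sum; apply: eq_bigr => i _; rewrite hornerXn.
have cp j : p`_j = \sum_(i < n'.+1) (j == (2^i)%N)%:R.
  by rewrite /p coef_sum; apply: eq_bigr => i _; rewrite coefXn.
have sp : (size p <= (2^n').+1)%N.
  apply/leq_sizeP => j hj; rewrite cp big1 // => i _.
  have : (2^i <= 2^n')%N by rewrite leq_exp2l // -ltnS.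
  move=> hi; suff -> : (j == (2^i)%N) = false by [].
  by apply/eqP; lia.
have p0 : p != 0.
  apply/eqP => /(congr1 (fun q : {poly F} => q`_(2^n'))).
  rewrite coef0 cp (bigD1 ord_max) //= eqxx big1 ?addr0; first by move/eqP; rewrite oner_eq0.
  move=> i hi; rewrite eqn_exp2l //.
  suff -> : (n' == i) = false by [].
  by apply: contraNF hi => /eqP h; apply/eqP/val_inj; symmetry; exact: h.
have [/existsP[c /eqP hc]|hn] := boolP [exists c, @trF F n'.+1 c == 1].
  by exists c.
have := max_poly_roots p0 _ (enum_uniq F).
have -> : all (root p) (enum F).
  apply/allP => x _; rewrite /root hp.
  case: (t01 x) => E; rewrite E ?eqxx //.
  by case/negP: hn; apply/existsP; exists x; rewrite E.
rewrite -cardE cF expnS => /(_ isT) h; exfalso.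
have : (0 < 2^n')%N by rewrite expn_gt0.
have := leq_trans h sp; lia.
Qed.

Lemma chi_c : exists c, ch c = -1.
Proof.
have [c hc] := tr_nonzero; exists c; by rewrite /chi hc oner_eq0.
Qed.

Lemma sum_chi y : \sum_(b : F) ch (b*y) = if y == 0 then (2^n)%:Z else 0.
Proof.
have [->|y0] := eqVneq y 0; rewrite ?eqxx.
  under eq_bigr do rewrite mulr0 chi0.
  by rewrite sumr_const -[#|xpredT|]/#|F| cardF natz.
have -> : \sum_b ch (b*y) = \sum_b ch b by rewrite [RHS](reindex_inj (mulIf y0)).
have [c hc] := chi_c.
set T := \sum_b _.
have : T = - T.
  rewrite {1}/T (reindex_inj (addIr c)) /=.
  under eq_bigr do rewrite chiD hc mulrN1.
  by rewrite sumrN.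
clearbody T; lia.
Qed.

Variables (r : nat) (f : F -> F).
Hypothesis f0 : f 0 = 0.
Hypothesis p0 : preim_card f 0 = 1%N.
Hypothesis fib : forall y, y != 0 -> y \in codom f -> preim_card f y = (2^r).+1.
Local Notation W b := (walsh n f b 0).

Lemma WE b : W b = \sum_x ch (b * f x).
Proof. by apply: eq_bigr => x _; rewrite mul0r addr0. Qed.

Lemma f_eq0 x : (f x == 0) = (x == 0).
Proof.
move: p0; rewrite /preim_card => /eqP/cards1P [a Ha].
have : 0 \in [set x | f x == 0] by rewrite inE f0.
rewrite Ha inE => /eqP a0.
have := congr1 (fun A : {set F} => x \in A) Ha; rewrite /= !inE -a0 => ->//.
Qed.

Lemma W0 : W 0 = (2^n)%:Z.
Proof.
rewrite WE; under eq_bigr do rewrite mul0r chi0.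
by rewrite sumr_const -[#|xpredT|]/#|F| cardF natz.
Qed.

Lemma sumW : \sum_b W b = (2^n)%:Z.
Proof.
rewrite (eq_bigr _ (fun b _ => WE b)) exchange_big /=.
under eq_bigr do rewrite sum_chi f_eq0.
by rewrite -big_mkcond big_pred1_eq.
Qed.

Lemma preimf x : preim_card f (f x) = if x == 0 then 1%N else (2^r).+1.
Proof.
have [->|x0] := eqVneq x 0; first by rewrite f0.
by apply: fib; [rewrite f_eq0 | apply: codom_f].
Qed.

Lemma sumW2 : \sum_b W b ^+ 2 = (2^n)%:Z * (1 + ((2^n)%:Z - 1) * ((2^r)%:Z + 1)).
Proof.
have E b : W b ^+ 2 = \sum_x \sum_y ch (b * (f x + f y)).
  rewrite expr2 WE mulr_suml; apply: eq_bigr => x _; rewrite mulr_sumr.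
  by apply: eq_bigr => y _; rewrite mulrDr chiD.
rewrite (eq_bigr _ (fun b _ => E b)) exchange_big /=.
under eq_bigr do rewrite exchange_big /=.
under eq_bigr do under eq_bigr do rewrite sum_chi addr_eq0 (oppr_pchar2 ch2).
have pc x : #|[pred y | f x == f y]| = preim_card f (f x).
  by rewrite /preim_card cardsE; apply: eq_card => y; rewrite !inE eq_sym.
under eq_bigr => x _ do rewrite -big_mkcond sumr_const pc preimf.
rewrite (bigD1 0) //= eqxx.
rewrite (eq_bigr (fun _ => (2^n)%:Z *+ (2^r).+1)); last by move=> x /negbTE ->.
rewrite sumr_const cardC1 -[#|xpredT|]/#|F| cardF.
rewrite !pmulrn !mulrzz.
have : (0 < 2^n)%N by rewrite expn_gt0.
move: (2^n)%N (2^r)%N => N R N0.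
have -> : (N.-1)%:Z = N%:Z - 1 by lia.
rewrite -addn1 PoszD; ring.
Qed.

Lemma Wdec b : exists K, W b = 1 + ((2^r)%:Z + 1) * K.
Proof.
exists (\sum_(y | y != 0) (if y \in codom f then ch (b * y) else 0)).
rewrite WE (bigD1 0) //= f0 mulr0 chi0; congr (_ + _).
rewrite (partition_big f (fun y => y != 0)); last by move=> x; rewrite f_eq0.
rewrite mulr_sumr; apply: eq_bigr => y y0.
rewrite (eq_bigr (fun _ => ch (b * y))); last by move=> x /andP[_ /eqP ->].
rewrite sumr_const.
have -> : #|[pred x | (x != 0) && (f x == y)]| = preim_card f y.
  rewrite /preim_card cardsE; apply: eq_card => x; rewrite !inE.
  have [->|//] := eqVneq x 0; rewrite unfold_in /= f0.
  by apply/esym/eqP => h; move: y0; rewrite -h eqxx.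
case: ifP => hy; first by rewrite fib // pmulrn mulrzz -addn1 PoszD mulrC.
have -> : preim_card f y = 0%N.
  apply/eqP; rewrite /preim_card cards_eq0; apply/eqP/setP => x; rewrite !inE.
  by apply: contraFF hy => /eqP <-; apply: codom_f.
by rewrite mulr0n mulr0.
Qed.

Variables (m : nat).
Hypothesis r0 : (0 < r)%N.
Hypothesis En : n = (2 * r * m)%N.
Hypothesis hcp : componentwise_plateaued n f.

Lemma Wnz b : W b != 0.
Proof.
have [K ->] := Wdec b.
have R1 : 1 <= (2^r)%:Z by have := expn_gt0 2 r; lia.
have [K0|[K0|K0]] : K = 0 \/ 1 <= K \/ K <= -1 by lia.
- by rewrite K0 mulr0 addr0.
- have : 0 <= ((2^r)%:Z + 1) * (K - 1) by apply: mulr_ge0; lia.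
  apply: contraTN => /eqP; lia.
- have : 0 <= ((2^r)%:Z + 1) * (- 1 - K) by apply: mulr_ge0; lia.
  apply: contraTN => /eqP; lia.
Qed.

Lemma platW b t : plateaued_comp n f b t -> W b ^+ 2 = (2^(n+t))%:Z.
Proof.
move/forallP/(_ 0)/orP => [|/eqP //]; by rewrite (negbTE (Wnz b)).
Qed.

Lemma Wform b : b != 0 -> exists q, (m <= q)%N /\ W b = (-1) ^+ q * (2 ^ (r * q))%:Z.
Proof.
move=> b0; have [t /platW ht] := hcp b b0.
have [K hK] := Wdec b.
by apply: (NT r m t _ K r0 hK); rewrite ht -En.
Qed.

Definition aa : int := (-1) ^+ m * (2 ^ (r * m))%:Z.
Definition cc : int := (-1) ^+ m.+1 * (2 ^ (r * m.+1))%:Z.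

Lemma sgn2 k : ((-1) ^+ k) ^+ 2 = 1 :> int.
Proof. exact: sqrr_sign. Qed.

Lemma sgnpm k : ((-1) ^+ k = 1 :> int) \/ ((-1) ^+ k = -1 :> int).
Proof. by have := @signr_odd int k; case: (odd k) => <-; rewrite ?expr1 ?expr0; auto. Qed.

Lemma aa2 : aa ^+ 2 = (2 ^ n)%:Z.
Proof. by rewrite /aa exprMn sgn2 mul1r -Zpow -expnM En; congr (Posz (2 ^ _)); lia. Qed.

Lemma cc2 : cc ^+ 2 = (2 ^ (n + 2 * r))%:Z.
Proof. by rewrite /cc exprMn sgn2 mul1r -Zpow -expnM En; congr (Posz (2 ^ _)); lia. Qed.

Lemma aacc : aa * cc = - ((2 ^ n)%:Z * (2 ^ r)%:Z).
Proof.
rewrite /aa /cc exprS.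
have -> : (-1) ^+ m * (2 ^ (r * m))%:Z * (-1 * (-1) ^+ m * (2 ^ (r * m.+1))%:Z)
  = - (((-1) ^+ m) ^+ 2 * ((2 ^ (r * m))%:Z * (2 ^ (r * m.+1))%:Z)) by ring.
rewrite sgn2 mul1r -!PoszM -!expnD En; congr (- Posz (2 ^ _)); lia.
Qed.

Lemma S1 : \sum_(b | b != 0) W b = 0.
Proof. by have := sumW; rewrite (bigD1 0) //= W0 => /(canRL (addKr _)); rewrite addNr. Qed.

Lemma S2 : \sum_(b | b != 0) W b ^+ 2 =
  (2^n)%:Z * (1 + ((2^n)%:Z - 1) * ((2^r)%:Z + 1)) - (2^n)%:Z ^+ 2.
Proof. by rewrite -sumW2 [in RHS](bigD1 0) //= W0 addrC addrK. Qed.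

Lemma S0 : \sum_(b : F | b != 0) (1 : int) = (2^n)%:Z - 1.
Proof.
rewrite sumr_const cardC1 -[#|xpredT|]/#|F| cardF pmulrn mulrzz mul1r.
have : (0 < 2^n)%N by rewrite expn_gt0.
move: (2^n)%N => N; lia.
Qed.

Lemma Psum : \sum_(b | b != 0) (W b - aa) * (W b - cc) = 0.
Proof.
rewrite (eq_bigr (fun b => W b ^+ 2 + (- (aa + cc)) * W b + aa * cc * 1)); last by move=> b _; ring.
rewrite !big_split /= -!mulr_sumr S1 S2 S0 aacc; ring.
Qed.

Lemma Wac b : b != 0 -> W b = aa \/ W b = cc.
Proof.
move=> b0.
have hge : forall i : F, i != 0 -> 0 <= (W i - aa) * (W i - cc).
  move=> i i0; have [q [mq ->]] := Wform i i0; exact: Pnonneg.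
move: (psumr_eq0P hge Psum b0) => /eqP; rewrite mulf_eq0 !subr_eq0 => /orP[] /eqP; auto.
Qed.

Lemma main_sec :
  [/\ ((2 ^ r).+1 * #|[set lam : F | (lam != 0%R) && bent_comp n f lam]|
         = 2 ^ r * (2 ^ n - 1))%N,
      ((2 ^ r).+1 * #|[set lam : F | (lam != 0%R) && plateaued_comp n f lam (2 * r)]|
         = 2 ^ n - 1)%N &
      forall b : F, b != 0 ->
        walsh n f b 0 = (-1) ^+ m * (2 ^ (r * m))%:Z \/
        walsh n f b 0 = (-1) ^+ m.+1 * (2 ^ (r * m.+1))%:Z].
Proof.
have acne : aa != cc.
  apply/eqP => h; have := cc2; rewrite -h aa2 => /eqP; rewrite eqz_nat eqn_exp2l //.
  by move/eqP; lia.
have platE b t : b != 0 -> plateaued_comp n f b t = (W b ^+ 2 == (2^(n+t))%:Z).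
  move=> b0; apply/idP/eqP => [/platW //| h].
  have [t' ht'] := hcp b b0.
  have := platW _ _ ht'; rewrite h => /eqP; rewrite eqz_nat eqn_exp2l // eqn_add2l => /eqP ->.
  exact: ht'.
have bentE b : b != 0 -> bent_comp n f b = (W b == aa).
  move=> b0; rewrite /bent_comp platE // addn0.
  case: (Wac b b0) => ->; first by rewrite aa2 !eqxx.
  rewrite cc2 eqz_nat eqn_exp2l // [cc == aa]eq_sym (negbTE acne).
  by apply/negbTE/eqP; lia.
have plat2E b : b != 0 -> plateaued_comp n f b (2 * r) = (W b == cc).
  move=> b0; rewrite platE //.
  case: (Wac b b0) => ->; last by rewrite cc2 !eqxx.
  rewrite aa2 eqz_nat eqn_exp2l // (negbTE acne).
  by apply/negbTE/eqP; lia.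
set A := #|[set b | (b != 0) && (W b == aa)]|.
set B := #|[set b | (b != 0) && (W b == cc)]|.
have gsum (G : int -> int) : \sum_(b | b != 0) G (W b) = G aa * A%:Z + G cc * B%:Z.
  rewrite (bigID (fun b => W b == aa)) /=.
  rewrite (eq_bigr (fun _ => G aa)); last by move=> b /andP[_ /eqP ->].
  rewrite [X in _ + X](eq_bigr (fun _ => G cc)); last first.
    move=> b /andP[b0 hb]; case: (Wac b b0) => E; last by rewrite E.
    by move: hb; rewrite E eqxx.
  rewrite !sumr_const !pmulrn !mulrzz; congr (_ * Posz _ + _ * Posz _).
    by rewrite /A cardsE.
  rewrite /B cardsE; apply: eq_card => b; rewrite !unfold_in /=.
  have [->|b0] := eqVneq b 0; first by [].
  by case: (Wac b b0) => ->; rewrite ?eqxx ?(negbTE acne) // [cc == aa]eq_sym (negbTE acne).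
have hW := gsum id; rewrite S1 /= in hW.
have h1 := gsum (fun _ => 1); rewrite S0 !mul1r in h1.
have hA : A%:Z = (2^r)%:Z * B%:Z.
  move: hW; rewrite /aa /cc exprS mulnS expnD PoszM.
  have : (-1) ^+ m * (2 ^ (r * m))%:Z != 0 :> int.
    rewrite mulf_eq0 negb_or signr_eq0 /= eqz_nat expn_eq0 /=; done.
  move: ((-1) ^+ m) (2 ^ (r * m))%N => s P hsP E.
  have : (s * P) * (A%:Z - (2^r)%:Z * B%:Z) = 0.
    by rewrite E; ring.
  by move/eqP; rewrite mulf_eq0 (negbTE hsP) /= subr_eq0 => /eqP.
set ZB := (2^r * B)%N in hA.
split.
- rewrite (_ : [set lam | _] = [set b | (b != 0) && (W b == aa)]); last first.
    apply/setP => b; rewrite !inE; have [->|b0] := eqVneq b 0; first by [].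
    by rewrite bentE.
  rewrite -/A; have : (0 < 2^n)%N by rewrite expn_gt0.
  move: h1 hA; rewrite /ZB; move: (2^n)%N (2^r)%N => N R; nia.
- rewrite (_ : [set lam | _] = [set b | (b != 0) && (W b == cc)]); last first.
    apply/setP => b; rewrite !inE; have [->|b0] := eqVneq b 0; first by [].
    by rewrite plat2E.
  rewrite -/B; have : (0 < 2^n)%N by rewrite expn_gt0.
  move: h1 hA; rewrite /ZB; move: (2^n)%N (2^r)%N => N R; nia.
- exact: Wac.
Qed.
End Tr.


Theorem theorem6p5 (r m n : nat) (F : finFieldType) (f : F -> F) :
  (0 < r)%N -> (0 < m)%N -> n = (2 * r * m)%N -> #|F| = (2 ^ n)%N ->
  almost_k_to_1 f (2 ^ r).+1 ->
  componentwise_plateaued n f ->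
  f 0 = 0 ->
  preim_card f 0 = 1%N ->
  [/\ ((2 ^ r).+1 * #|[set lam : F | (lam != 0%R) && bent_comp n f lam]|
         = 2 ^ r * (2 ^ n - 1))%N,
      ((2 ^ r).+1 * #|[set lam : F | (lam != 0%R) && plateaued_comp n f lam (2 * r)]|
         = 2 ^ n - 1)%N &
      forall b : F, b != 0 ->
        walsh n f b 0 = (-1) ^+ m * (2 ^ (r * m))%:Z \/
        walsh n f b 0 = (-1) ^+ m.+1 * (2 ^ (r * m.+1))%:Z].
Proof.
move=> r0 m0 En cardF [y0 [hy0 py0 hk]] hcp f0 p0.
have n0 : (0 < n)%N by rewrite En; nia.
have ch2 : (2%N \in [pchar F]) := card_finPcharP cardF (isT : prime 2).
have y00 : y0 = 0.
  apply/eqP; apply: contraT => yn.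
  have : preim_card f 0 = (2 ^ r).+1.
    by apply: hk; [rewrite -f0; apply: codom_f | rewrite eq_sym].
  rewrite p0 => /eqP; rewrite eqSS eq_sym expn_eq0 /=; done.
have fib : forall y, y != 0 -> y \in codom f -> preim_card f y = (2^r).+1.
  by move=> y yn yc; apply: hk => //; rewrite y00.
exact: (@main_sec F n ch2 cardF n0 r f f0 p0 fib m r0 En hcp).
Qed.
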